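(* Define sets of positive integers $R_1,R_2,\dots$ by $R_1=\{2\}$ and, for $k\geq 1$, $R_{k+1}=\{(x+5)^2 : x\in R_k\}\cup\{x\in\mathbb{Z}_{>0} : x^2\in R_k\}$. Then every integer $x$ with $x\geq 2$ and $x\not\equiv 0\pmod 5$ lies in $R_i$ for at least one $i\geq 1$. *)

(* Defs.v *)
From mathcomp Require Import all_boot.
Set Implicit Arguments. Unset Strict Implicit. Unset Printing Implicit Defensive.

(* Rset k y  <->  y ∈ R_k, for k >= 1.  (Rset 0 is the empty set; unused.)
   R_1 = {2};  R_{k+1} = {(x+5)^2 : x ∈ R_k} ∪ {x ∈ Z_{>0} : x^2 ∈ R_k}. *)
Fixpoint Rset (k : nat) (y : nat) : Prop :=
  match k with
  | 0 => False
  | 1 => y = 2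
  | k'.+1 => (exists x, Rset k' x /\ y = (x + 5) ^ 2)
             \/ (0 < y /\ Rset k' (y ^ 2))
  end.

(* Main.v *)
Require Import Defs.
From mathcomp Require Import all_boot.
From mathcomp Require Import zify.

Definition S y := exists i, 1 <= i /\ Rset i y.

Lemma S2 : S 2.
Proof. by exists 1. Qed.

Lemma Ssq x : S x -> S ((x + 5) ^ 2).
Proof.
case=> [[|j] [Hi H]] //; exists j.+2; split => //=; left; by exists x.
Qed.

Lemma Ssqrt y : 0 < y -> S (y ^ 2) -> S y.
Proof.
move=> Hy [[|j] [Hi H]] //; exists j.+2; split => //=; by right.
Qed.

Lemma S5 x : S x -> S (x + 5).
Proof. move=> H; apply: Ssqrt; [lia | exact: Ssq]. Qed.

Lemma S5k x k : S x -> S (x + 5 * k).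
Proof.
move=> H; elim: k => [|k IH]; first by rewrite muln0 addn0.
have -> : x + 5 * k.+1 = (x + 5 * k) + 5 by lia.
exact: S5.
Qed.

Lemma Sup a b : S a -> a <= b -> a %% 5 = b %% 5 -> S b.
Proof.
move=> H hab hm.
have -> : b = a + 5 * ((b - a) %/ 5) by lia.
exact: S5k.
Qed.

Lemma Sdown a y : S a -> 0 < y -> a <= y ^ 2 -> a %% 5 = (y ^ 2) %% 5 -> S y.
Proof. move=> H hy h1 h2; apply: Ssqrt => //; exact: Sup H h1 h2. Qed.

Theorem corollary6 (x : nat) :
  2 <= x -> x %% 5 != 0 -> exists i, 1 <= i /\ Rset i x.
Proof.
move=> h2 h5.
have S49 : S 49 by rewrite (_ : 49 = (2+5)^2) //; exact: Ssq S2.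
have S8 : S 8 := Sdown 49 8 S49 erefl erefl erefl.
have S54 : S 54 := Sup 49 54 S49 erefl erefl.
have S2916 : S 2916 by rewrite (_ : 2916 = (49+5)^2) //; exact: Ssq S49.
have S56 : S 56 := Sdown 2916 56 S2916 erefl erefl erefl.
have S9 : S 9 := Sdown 56 9 S56 erefl erefl erefl.
have S11 : S 11 := Sdown 56 11 S56 erefl erefl erefl.
have S3 : S 3 := Sdown 9 3 S9 erefl erefl erefl.
have S4 : S 4 := Sdown 11 4 S11 erefl erefl erefl.
have S6 : S 6 := Sdown 11 6 S11 erefl erefl erefl.
have : x %% 5 = 1 \/ x %% 5 = 2 \/ x %% 5 = 3 \/ x %% 5 = 4 by lia.
case=> [h|[h|[h|h]]].
- apply: (Sup 6 x S6); lia.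
- apply: (Sup 2 x S2); lia.
- apply: (Sup 3 x S3); lia.
- apply: (Sup 4 x S4); lia.
Qed.
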